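(* Let $N\ge 2$, let $y_i,r_i$ ($1\le i\le N$) be real constants, let $\bm{x}_j=(|y_1+jr_1|,\dots,|y_N+jr_N|)^T$ for integers $j$, and for a set $J=\{j_1<\dots<j_N\}$ of integers let $U(J)=\max[\bm{x}_{j_1}\ \dots\ \bm{x}_{j_N}]$. Let $1\le k_1<k_2<k_3\le N+1$. If \[ U(\{1,\dots,N+1\}\setminus\{k_2\})+U(\{1,\dots,N+2\}\setminus\{k_1,k_3\})\ \ge\ U(\{1,\dots,N+1\}\setminus\{k_3\})+U(\{1,\dots,N+2\}\setminus\{k_1,k_2\}), \] then \[ U(\{1,\dots,N+1\}\setminus\{k_2\})+U(\{1,\dots,N+2\}\setminus\{k_1,k_3\}) =\max\Bigl(U(\{1,\dots,N+1\}\setminus\{k_3\})+U(\{1,\dots,N+2\}\setminus\{k_1,k_2\}),\ U(\{1,\dots,N+1\}\setminus\{k_1\})+U(\{1,\dots,N+2\}\setminus\{k_2,k_3\})\Bigr). \]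
   Context: Ultradiscrete permanent (UP): for a real $N\times N$ matrix $A=(a_{ij})$, $\max A\equiv\max_{\pi}\sum_{i=1}^N a_{i\pi(i)}$ over all permutations $\pi$ of $\{1,\dots,N\}$; $\max[\bm{b}_1\ \dots\ \bm{b}_N]$ denotes the UP of the matrix with columns $\bm{b}_1,\dots,\bm{b}_N$. *)

(* Defs.v *)
From mathcomp Require Import all_boot all_order all_algebra all_fingroup.
Set Implicit Arguments. Unset Strict Implicit. Unset Printing Implicit Defensive.
Import Order.TTheory GRing.Theory Num.Theory.
Local Open Scope ring_scope.

(* The max is taken with the identity term as the seed, which is one of
   the terms, so this is exactly the maximum over all permutations. *)
Definition updiag (R : realDomainType) (n : nat) (A : 'M[R]_n) (s : 'S_n) : R :=
  \sum_(i < n) A i (s i).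

Definition uperm (R : realDomainType) (n : nat) (A : 'M[R]_n) : R :=
  \big[Num.max/updiag A 1%g]_(s : 'S_n) updiag A s.

Definition xvec (R : realDomainType) (N : nat) (y r : 'I_N -> R) (j : int) (i : 'I_N) : R :=
  `|y i + j%:~R * r i|.

Definition idx_set (m : nat) (K : seq nat) : seq nat :=
  [seq j <- iota 1 m | j \notin K].

(* U(J) = max[x_{j_1} ... x_{j_N}] where J = {j_1 < ... < j_N} given as
   an increasing list; column c is x_{j_{c+1}} *)
Definition U (R : realDomainType) (N : nat) (y r : 'I_N -> R) (J : seq nat) : R :=
  uperm (\matrix_(i < N, c < N) xvec y r (nth 0%N J c)%:Z i).

(* Main.v *)
Require Import Defs.
From mathcomp Require Import all_boot all_order all_algebra all_fingroup.
From mathcomp Require Import zify.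
Set Implicit Arguments. Unset Strict Implicit. Unset Printing Implicit Defensive.
Import Order.TTheory GRing.Theory Num.Theory.
Local Open Scope ring_scope.
Lemma pig n (h : 'I_n -> nat) (L : seq nat) :
  injective h -> (forall i, h i \in L) -> (n <= size L)%N.
Proof.
move=> hi hL; have := @uniq_leq_size _ (map h (enum 'I_n)) L.
rewrite size_map size_enum_ord; apply.
  by rewrite map_inj_uniq ?enum_uniq.
by move=> x /mapP [i _ ->].
Qed.
Lemma exch n (f g : 'I_n -> nat) (S : seq nat) (a b c d : nat) :
  (size S + 2 <= n)%N ->
  a \notin S -> b \notin S -> c \notin S -> d \notin S ->
  a != b -> a != c -> a != d -> b != c -> b != d -> c != d ->
  injective f -> injective g ->
  (forall i, f i \in [:: a, b & S]) -> (forall i, g i \in [:: c, d & S]) ->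
  exists f' : 'I_n -> nat, exists g' : 'I_n -> nat,
    [/\ injective f', injective g',
      (forall i, (f' i = f i /\ g' i = g i) \/ (f' i = g i /\ g' i = f i)) &
      ((forall i, f' i \in [:: b, c & S]) /\ (forall i, g' i \in [:: a, d & S]) \/
       (forall i, f' i \in [:: b, d & S]) /\ (forall i, g' i \in [:: a, c & S]))].
Proof.
move=> hS aS bS cS dS ab ac ad bc bd cd fi gi fS gS.
have [i0 fi0] : exists i0, f i0 = a.
  case: (pickP (fun i => f i == a)) => [i /eqP fa | h]; first by exists i.
  suff : (n <= size (b :: S))%N by rewrite /=; lia.
  apply: (pig fi) => i; have := fS i; rewrite !inE.
  by have := h i; rewrite /= => /negbT/negbTE ->.
pose e : rel 'I_n := fun i j => g i == f j.
pose Q := fun j => connect e i0 j.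
have QA : forall i j, Q i -> g i = f j -> Q j.
  move=> i j Qi gij; apply: (connect_trans Qi); apply: connect1; exact/eqP.
have Qpred : forall j, Q j -> j != i0 -> exists k, Q k /\ g k = f j.
  move=> j /connectP [p pp ->]; case/lastP: p pp => [|p x] /=; first by rewrite eqxx.
  rewrite rcons_path last_rcons => /andP [pp ex] _.
  exists (last i0 p); split; last exact/eqP.
  by apply/connectP; exists p.
have gnS : forall j, g j != a /\ g j != b.
  move=> j; have := gS j; rewrite !inE; case/or3P => [/eqP->|/eqP->|jS].
  - by rewrite eq_sym ac eq_sym bc.
  - by rewrite eq_sym ad eq_sym bd.
  - by split; apply/negP => /eqP ga; [move: aS | move: bS]; rewrite -ga jS.
have QB : forall i j, Q i -> f i = g j -> Q j.
  move=> i j Qi fij; case: (eqVneq i i0) => [ii0 | ni0].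
    by move: fij; rewrite ii0 fi0 => aj; have [] := gnS j; rewrite -aj eqxx.
  have [k [Qk gk]] := Qpred i Qi ni0.
  by rewrite -(gi k j) // gk.
have Qnb : forall i, Q i -> f i != b.
  move=> i Qi; case: (eqVneq i i0) => [->|ni0]; first by rewrite fi0.
  by have [k [_ <-]] := Qpred i Qi ni0; have := gnS k => [[]].
have Qa : forall i, f i = a -> Q i.
  move=> i fa; have -> : i = i0 by apply: fi; rewrite fa fi0.
  exact: connect0.
pose f' := fun i => if Q i then g i else f i.
pose g' := fun i => if Q i then f i else g i.
have f'i : injective f'.
  move=> i j; rewrite /f'; case Qi: (Q i); case Qj: (Q j).
  - exact: gi.
  - by move=> /(QA _ _ Qi); rewrite Qj.
  - by move=> /esym /(QA _ _ Qj); rewrite Qi.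
  - exact: fi.
have g'i : injective g'.
  move=> i j; rewrite /g'; case Qi: (Q i); case Qj: (Q j).
  - exact: fi.
  - by move=> /(QB _ _ Qi); rewrite Qj.
  - by move=> /esym /(QB _ _ Qj); rewrite Qi.
  - exact: gi.
have f'S : forall i, f' i \in [:: b, c, d & S].
  move=> i; rewrite /f'; case Qi: (Q i).
    by have := gS i; rewrite !inE => /or3P [->|->|->]; rewrite ?orbT.
  have := fS i; rewrite !inE => /or3P [/eqP fa|->|->]; rewrite ?orbT //.
  by move: (Qa _ fa); rewrite Qi.
have g'S : forall i, g' i \in [:: a, c, d & S].
  move=> i; rewrite /g'; case Qi: (Q i).
    have := fS i; have := Qnb i Qi; rewrite !inE => /negbTE ->.
    by rewrite /= => /orP [->|->]; rewrite ?orbT.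
  by have := gS i; rewrite !inE => /or3P [->|->|->]; rewrite ?orbT.
have fcd : forall i, f i != c /\ f i != d.
  move=> i; have := fS i; rewrite !inE; case/or3P => [/eqP->|/eqP->|jS].
  - by rewrite ac ad.
  - by rewrite bc bd.
  - by split; apply/negP => /eqP ga; [move: cS | move: dS]; rewrite -ga jS.
have f'cd : forall i x, f' i = x -> (x = c \/ x = d) -> Q i /\ g i = x.
  move=> i x; rewrite /f'; case Qi: (Q i) => fx hx; first by split.
  by have [h1 h2] := fcd i; rewrite -fx in hx; case: hx => hx; rewrite hx eqxx in h1 h2.
have g'cd : forall i x, g' i = x -> (x = c \/ x = d) -> ~~ Q i /\ g i = x.
  move=> i x; rewrite /g'; case Qi: (Q i) => fx hx; last by split.
  by have [h1 h2] := fcd i; rewrite -fx in hx; case: hx => hx; rewrite hx eqxx in h1 h2.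
have [j f'j] : exists j, f' j = c \/ f' j = d.
  case: (pickP (fun i => (f' i == c) || (f' i == d))) => [i /orP [/eqP|/eqP] h| h].
  - by exists i; left.
  - by exists i; right.
  suff : (n <= size (b :: S))%N by rewrite /=; lia.
  apply: (pig f'i) => i; have := f'S i; have := h i; rewrite !inE /=.
  by move=> /norP [/negbTE -> /negbTE ->].
have [k g'k] : exists k, g' k = c \/ g' k = d.
  case: (pickP (fun i => (g' i == c) || (g' i == d))) => [i /orP [/eqP|/eqP] h| h].
  - by exists i; left.
  - by exists i; right.
  suff : (n <= size (a :: S))%N by rewrite /=; lia.
  apply: (pig g'i) => i; have := g'S i; have := h i; rewrite !inE /=.
  by move=> /norP [/negbTE -> /negbTE ->].
exists f', g'; split => //.
  by move=> i; rewrite /f' /g'; case: (Q i); [right|left].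
have key : forall x x', (x = c /\ x' = d \/ x = d /\ x' = c) -> f' j = x ->
   (forall i, f' i \in [:: b, x & S]) /\ (forall i, g' i \in [:: a, x' & S]).
  move=> x x' hxx fjx.
  have hx : x = c \/ x = d by case: hxx => [[-> _]|[-> _]]; auto.
  have hx' : x' = c \/ x' = d by case: hxx => [[_ ->]|[_ ->]]; auto.
  have nxx : x != x' by case: hxx => [[-> ->]|[-> ->]]; rewrite // eq_sym.
  have [Qj gj] := f'cd _ _ fjx hx.
  have [nQk gk] : ~~ Q k /\ g k = x'.
    have [e1|e1] := g'k.
    - have [h1 h2] := g'cd _ _ e1 (or_introl erefl).
      split => //; rewrite h2; case: hxx => [[ex ex']|[ex ex']]; last by rewrite ex'.
      have jk : j = k by apply: gi; rewrite gj h2 ex.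
      by move: h1; rewrite -jk Qj.
    - have [h1 h2] := g'cd _ _ e1 (or_intror erefl).
      split => //; rewrite h2; case: hxx => [[ex ex']|[ex ex']]; first by rewrite ex'.
      have jk : j = k by apply: gi; rewrite gj h2 ex.
      by move: h1; rewrite -jk Qj.
  split => i.
  - case: (eqVneq (f' i) x') => [fx'|nfx].
      have [Qi gi'] := f'cd _ _ fx' hx'.
      have ik : i = k by apply: gi; rewrite gi' gk.
      by move: nQk; rewrite -ik Qi.
    have := f'S i; rewrite !inE.
    case: hxx => [[ex ex']|[ex ex']]; rewrite ex ex' in nfx *;
    by move: (f' i == b) (f' i == c) (f' i == d) (f' i \in S) nfx => [] [] [] [].
  - case: (eqVneq (g' i) x) => [gx|ngx].
      have [nQi gi'] := g'cd _ _ gx hx.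
      have ij : i = j by apply: gi; rewrite gi' gj.
      by move: nQi; rewrite ij Qj.
    have := g'S i; rewrite !inE.
    case: hxx => [[ex ex']|[ex ex']]; rewrite ex ex' in ngx *;
    by move: (g' i == a) (g' i == c) (g' i == d) (g' i \in S) ngx => [] [] [] [].
case: f'j => fj.
  by left; apply: key fj; left.
by right; apply: key fj; right.
Qed.
Lemma U_spec (R : realDomainType) (N : nat) (y r : 'I_N -> R) (J : seq nat) :
  uniq J -> size J = N ->
  (forall h : 'I_N -> nat, injective h -> (forall i, h i \in J) ->
     \sum_i xvec y r (h i)%:Z i <= U y r J) /\
  exists h : 'I_N -> nat, [/\ injective h, forall i, h i \in J &
     U y r J = \sum_i xvec y r (h i)%:Z i].
Proof.
move=> uJ sJ.
set M := \matrix_(i < N, c < N) xvec y r (nth 0%N J c)%:Z i.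
have updE : forall s : 'S_N, updiag M s = \sum_i xvec y r (nth 0%N J (s i))%:Z i.
  by move=> s; apply: eq_bigr => i _; rewrite /M mxE.
split.
  move=> h hi hJ.
  have lt : forall i, (index (h i) J < N)%N by move=> i; rewrite -sJ index_mem.
  pose sf := fun i => Ordinal (lt i).
  have sfi : injective sf.
    move=> i j /(congr1 val) /= eij; apply: hi.
    by rewrite -(nth_index 0%N (hJ i)) eij nth_index.
  pose s := perm sfi.
  have -> : \sum_i xvec y r (h i)%:Z i = updiag M s.
    rewrite updE; apply: eq_bigr => i _; rewrite permE /= nth_index //.
  rewrite /U -/M /uperm (bigD1 s) //= le_max lexx //.
have [s ->] : exists s : 'S_N, U y r J = updiag M s.
  rewrite /U -/M /uperm.
  apply: (big_ind (fun v => exists s, v = updiag M s)).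
  - by exists 1%g.
  - move=> u v [s1 ->] [s2 ->]; case: (leP (updiag M s1) (updiag M s2)) => h.
      by exists s2.
    by exists s1.
  - by move=> s _; exists s.
exists (fun i => nth 0%N J (s i)); split.
- by move=> i j /eqP; rewrite nth_uniq ?sJ // => /eqP/val_inj/perm_inj.
- by move=> i; rewrite mem_nth // sJ.
- exact: updE.
Qed.

Lemma plu (R : realDomainType) (N : nat) (y r : 'I_N -> R) (S : seq nat)
  (a b c d : nat) (Lab Lcd Lac Lbd Lad Lbc : seq nat) :
  (size S + 2 <= N)%N ->
  a \notin S -> b \notin S -> c \notin S -> d \notin S ->
  a != b -> a != c -> a != d -> b != c -> b != d -> c != d ->
  uniq Lab -> uniq Lcd -> uniq Lac -> uniq Lbd -> uniq Lad -> uniq Lbc ->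
  size Lab = N -> size Lcd = N -> size Lac = N -> size Lbd = N ->
  size Lad = N -> size Lbc = N ->
  Lab =i [:: a, b & S] -> Lcd =i [:: c, d & S] -> Lac =i [:: a, c & S] ->
  Lbd =i [:: b, d & S] -> Lad =i [:: a, d & S] -> Lbc =i [:: b, c & S] ->
  U y r Lab + U y r Lcd <= Num.max (U y r Lac + U y r Lbd) (U y r Lad + U y r Lbc).
Proof.
move=> hS aS bS cS dS ab ac ad bc bd cd uab ucd uac ubd uad ubc
  sab scd sac sbd sad sbc mab mcd mac mbd mad mbc.
have [_ [h1 [i1 m1 ->]]] := U_spec y r uab sab.
have [_ [h2 [i2 m2 ->]]] := U_spec y r ucd scd.
have m1' : forall i, h1 i \in [:: a, b & S] by move=> i; rewrite -mab.
have m2' : forall i, h2 i \in [:: c, d & S] by move=> i; rewrite -mcd.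
have [f' [g' [fi gi sw cases]]] := @exch N h1 h2 S a b c d hS aS bS cS dS
   ab ac ad bc bd cd i1 i2 m1' m2'.
have eqs : \sum_i xvec y r (h1 i)%:Z i + \sum_i xvec y r (h2 i)%:Z i =
           \sum_i xvec y r (f' i)%:Z i + \sum_i xvec y r (g' i)%:Z i.
  rewrite -!big_split /=; apply: eq_bigr => i _.
  by case: (sw i) => [[-> ->]|[-> ->]] //; rewrite addrC.
rewrite eqs; case: cases => [[hf hg]|[hf hg]].
- rewrite le_max; apply/orP; right; rewrite addrC; apply: lerD.
  + by have [+ _] := U_spec y r uad sad; apply => // i; rewrite mad.
  + by have [+ _] := U_spec y r ubc sbc; apply => // i; rewrite mbc.
- rewrite le_max; apply/orP; left; rewrite addrC; apply: lerD.
  + by have [+ _] := U_spec y r uac sac; apply => // i; rewrite mac.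
  + by have [+ _] := U_spec y r ubd sbd; apply => // i; rewrite mbd.
Qed.
Lemma mem_idx m K j : (j \in idx_set m K) = (j \notin K) && (1 <= j <= m)%N.
Proof. by rewrite /idx_set mem_filter mem_iota add1n ltnS. Qed.

Lemma uniq_idx m K : uniq (idx_set m K).
Proof. by rewrite /idx_set filter_uniq // iota_uniq. Qed.

Lemma count_memK m K : uniq K -> all (fun k => 1 <= k <= m)%N K ->
  count (mem K) (iota 1 m) = size K.
Proof.
elim: K => [|k K IH] /=; first by rewrite (eq_count (a2 := pred0)) ?count_pred0.
case/andP => kK uK /andP [hk aK].
have -> : count (mem (k :: K)) (iota 1 m) =
          (count (pred1 k) (iota 1 m) + count (mem K) (iota 1 m))%N.
  rewrite -count_predUI.
  rewrite (eq_count (a1 := predI _ _) (a2 := pred0)) ?count_pred0 ?addn0.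
    by apply: eq_count => x; rewrite /= inE.
  by move=> x /=; apply/andP => -[/eqP -> kK']; move: kK; rewrite kK'.
rewrite IH // count_uniq_mem ?iota_uniq // mem_iota add1n ltnS hk.
by rewrite add1n.
Qed.

Lemma size_idx m K : uniq K -> all (fun k => 1 <= k <= m)%N K ->
  size (idx_set m K) = (m - size K)%N.
Proof.
move=> uK aK; rewrite /idx_set size_filter.
have -> : count (fun j => j \notin K) (iota 1 m) = count (predC (mem K)) (iota 1 m).
  by apply: eq_count.
have := count_predC (mem K) (iota 1 m); rewrite size_iota count_memK //.
lia.
Qed.

Lemma fin (R : realDomainType) (A C E : R) :
  C <= A -> A <= Num.max C E -> E <= Num.max C A -> A = Num.max C E.
Proof.
move=> hCA h1 h2; apply/eqP; rewrite eq_le h1 ge_max hCA /=.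
by move: h2; rewrite le_max => /orP [h|//]; exact: le_trans h hCA.
Qed.

Ltac side S := first [ exact: uniq_idx
  | (move=> j; unfold S; rewrite !(mem_idx, inE); lia)
  | (rewrite size_idx //= ?inE ?andbT; lia)
  | (unfold S; rewrite mem_idx !inE eqxx ?orbT //=)
  | lia ].

Theorem lemma1 (R : realFieldType) (N : nat) (hN : (2 <= N)%N)
  (y r : 'I_N -> R) (k1 k2 k3 : nat)
  (hk1 : (1 <= k1)%N) (hk12 : (k1 < k2)%N) (hk23 : (k2 < k3)%N)
  (hk3 : (k3 <= N.+1)%N) :
  U y r (idx_set N.+1 [:: k2]) + U y r (idx_set N.+2 [:: k1; k3])
    >= U y r (idx_set N.+1 [:: k3]) + U y r (idx_set N.+2 [:: k1; k2]) ->
  U y r (idx_set N.+1 [:: k2]) + U y r (idx_set N.+2 [:: k1; k3])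
    = Num.max (U y r (idx_set N.+1 [:: k3]) + U y r (idx_set N.+2 [:: k1; k2]))
              (U y r (idx_set N.+1 [:: k1]) + U y r (idx_set N.+2 [:: k2; k3])).
Proof.
move=> hAC.
set S := idx_set N.+2 [:: k1; k2; k3; N.+2].
have sS : size S = (N.+2 - 4)%N.
  by rewrite size_idx //= ?inE; lia.
have sz1 : forall k, (1 <= k <= N.+1)%N -> size (idx_set N.+1 [:: k]) = N.
  by move=> k hk; rewrite size_idx //= ?andbT //; lia.
have sz2 : forall k k', (1 <= k < k')%N -> (k' <= N.+2)%N ->
    size (idx_set N.+2 [:: k; k']) = N.
  by move=> k k' h h'; rewrite size_idx //= ?inE ?andbT; lia.
have nS : forall k, k \in [:: k1; k2; k3; N.+2] -> k \notin S.
  by move=> k hk; rewrite mem_idx hk.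
have hS : (size S + 2 <= N)%N by rewrite sS; lia.
have H1 : U y r (idx_set N.+1 [:: k2]) + U y r (idx_set N.+2 [:: k1; k3]) <=
   Num.max (U y r (idx_set N.+1 [:: k3]) + U y r (idx_set N.+2 [:: k1; k2]))
           (U y r (idx_set N.+2 [:: k2; k3]) + U y r (idx_set N.+1 [:: k1])).
  by apply: (@plu R N y r S k1 k3 k2 N.+2) => //; side S.
have H2 : U y r (idx_set N.+1 [:: k1]) + U y r (idx_set N.+2 [:: k2; k3]) <=
   Num.max (U y r (idx_set N.+1 [:: k3]) + U y r (idx_set N.+2 [:: k1; k2]))
           (U y r (idx_set N.+2 [:: k1; k3]) + U y r (idx_set N.+1 [:: k2])).
  by apply: (@plu R N y r S k2 k3 k1 N.+2) => //; side S.
rewrite [U y r (idx_set N.+2 [:: k2; k3]) + _]addrC in H1.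
rewrite [U y r (idx_set N.+2 [:: k1; k3]) + _]addrC in H2.
exact: fin hAC H1 H2.
Qed.
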